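(* Suppose an SCC $F$ is pure-Nash-implemented by $\mathcal M=\langle M,g\rangle$. Let $(i,\theta)\in\mathcal I\times\Theta$ and $m\in PNE^{(\mathcal M,\theta)}$. If $F(\theta)\subseteq\arg\min_{z\in Z^*}u_i^\theta(z)$, $\Xi_i(\theta)\ne\emptyset$, and $Z^*\cap\mathcal L_i^Z(F(\theta),\theta)$ is an $i$-$Z^*$-max set, then $$\bigcup_{m_i'\in M_i}\mathrm{SUPP}[g(m_i',m_{-i})]\subseteq Z^*\cap\mathcal L_i^Z(F(\theta),\theta)\cap\Big(\bigcup_{K\in\Xi_i(\theta)}\bigcap_{\theta'\in K}F(\theta')\Big).$$
   Context: Standing setup: $\mathcal I=\{1,\dots,I\}$ finite, $I\ge 3$; $\Theta$ finite or countably infinite; $Z$ finite; $Y=\Delta(Z)$; $u_i^\theta:Z\to\mathbb R$, $U_i^\theta(y)=\sum_zy_zu_i^\theta(z)$; $\mathcal L_i^Z(\alpha,\theta)=\{z\in Z:U_i^\theta(\alpha)\ge u_i^\theta(z)\}$ and $\mathcal L_i^Z(E,\theta)=\bigcap_{z\in E}\mathcal L_i^Z(z,\theta)$. A mechanism $\mathcal M=\langle M=\times_iM_i,g:M\to Y\rangle$ has countable $M_i$; $PNE^{(\mathcal M,\theta)}$ is the set of pure Nash equilibria at $\theta$. $F$ is pure-Nash-implemented by $\mathcal M$ if $\bigcup_{m\in PNE^{(\mathcal M,\theta)}}\mathrm{SUPP}(g[m])=F(\theta)$ for all $\theta$. A nonempty $E\subseteq Z$ is an $i$-max set if for some $\theta$,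 $E\subseteq\arg\max_{z\in E}u_i^\theta(z)$ and $E\subseteq\arg\max_{z\in Z}u_j^\theta(z)$ for all $j\ne i$. $Z^*=\bigcup_\theta F(\theta)$ if $Z$ is an $i$-max set for some $i$, else $Z^*=Z$. A nonempty $E\subseteq Z^*$ is an $i$-$Z^*$-$\theta$-max set if $E\subseteq\arg\max_{z\in E}u_i^\theta(z)$ and $E\subseteq\arg\max_{z\in Z^*}u_j^\theta(z)$ for all $j\ne i$; $\Lambda^i(E)=\{\theta:E\text{ is an }i\text{-}Z^*\text{-}\theta\text{-max set}\}$ ($=\emptyset$ for $E=\emptyset$); $E$ is an $i$-$Z^*$-max set if $\Lambda^i(E)\ne\emptyset$. $\Theta_i^\theta=\{\theta':F(\theta)\text{ is an }i\text{-}Z^*\text{-}\theta'\text{-max set and }F(\theta)\subseteq F(\theta')\}$; $\Xi_i(\theta)=\{K\subseteq\Theta_i^\theta,K\ne\emptyset:\Theta_i^\theta\cap\Lambda^i(Z^*\cap\mathcal L_i^Z(F(\theta),\theta)\cap\bigcap_{\theta'\in K}F(\theta'))=K\}$. *)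

(* Defs.v *)
From HB Require Import structures.
From mathcomp Require Import all_boot all_order all_algebra.
From mathcomp Require Import boolp classical_sets reals.
Set Implicit Arguments. Unset Strict Implicit. Unset Printing Implicit Defensive.
Import Order.TTheory GRing.Theory Num.Theory.
Local Open Scope ring_scope.
Local Open Scope classical_set_scope.

Record lottery (Z : finType) (R : realType) := Lottery {
  lprob :> Z -> R;
  lprob_ge0 : forall z, 0 <= lprob z;
  lprob_sum1 : \sum_(z : Z) lprob z = 1 }.

Section Defs.
Variables (R : realType) (n : nat) (Theta : countType) (Z : finType).
Variable u : 'I_n -> Theta -> Z -> R.
Variable F : Theta -> set Z.

Definition Uexp (y : lottery Z R) (v : Z -> R) : R := \sum_(z : Z) y z * v z.

Definition supp (y : lottery Z R) : set Z := [set z | 0 < y z].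

Definition argmax (E : set Z) (f : Z -> R) : set Z :=
  [set z | E z /\ forall z', E z' -> f z' <= f z].
Definition argmin (E : set Z) (f : Z -> R) : set Z :=
  [set z | E z /\ forall z', E z' -> f z <= f z'].

Definition lowerZ (i : 'I_n) (th : Theta) (z' : Z) : set Z :=
  [set z | u i th z <= u i th z'].
Definition lowerZE (i : 'I_n) (th : Theta) (E : set Z) : set Z :=
  \bigcap_(z' in E) lowerZ i th z'.

Definition imax_set (i : 'I_n) (E : set Z) : Prop :=
  E !=set0 /\ exists th : Theta,
    E `<=` argmax E (u i th) /\
    forall j : 'I_n, j != i -> E `<=` argmax setT (u j th).

Definition Zstar : set Z :=
  if `[< exists i, imax_set i setT >] then \bigcup_(th in setT) F th else setT.

Definition iZth_max (i : 'I_n) (th : Theta) (E : set Z) : Prop :=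
  E !=set0 /\ E `<=` Zstar /\
  E `<=` argmax E (u i th) /\
  forall j : 'I_n, j != i -> E `<=` argmax Zstar (u j th).

(* Lambda^i(E) (empty for E empty, since iZth_max requires nonemptiness) *)
Definition Lambda (i : 'I_n) (E : set Z) : set Theta := [set th | iZth_max i th E].

Definition iZ_max (i : 'I_n) (E : set Z) : Prop := Lambda i E !=set0.

Definition Theta_i (i : 'I_n) (th : Theta) : set Theta :=
  [set th' | iZth_max i th' (F th) /\ F th `<=` F th'].

Definition Xi (i : 'I_n) (th : Theta) : set (set Theta) :=
  [set K | K `<=` Theta_i i th /\ K !=set0 /\
     Theta_i i th `&`
       Lambda i (Zstar `&` lowerZE i th (F th) `&` \bigcap_(th' in K) F th') = K].

Variable M : 'I_n -> countType.
Variable g : (forall i, M i) -> lottery Z R.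

(* pure Nash equilibria at theta; dfwith m mi' is the profile (m_i', m_{-i}) *)
Definition PNE (th : Theta) : set (forall i, M i) :=
  [set m | forall (i : 'I_n) (mi' : M i),
     Uexp (g (dfwith m mi')) (u i th) <= Uexp (g m) (u i th)].

Definition pure_nash_implements : Prop :=
  forall th : Theta, \bigcup_(m in PNE th) supp (g m) = F th.

End Defs.

(* Main.v *)
Require Import Defs.
From HB Require Import structures.
From mathcomp Require Import all_boot all_order all_algebra.
From mathcomp Require Import boolp classical_sets reals.
Local Open Scope ring_scope.
Local Open Scope classical_set_scope.
Import Order.TTheory GRing.Theory Num.Theory.

Section Aux.
Variables (R : realType) (Z : finType).

Lemma U_le (y : lottery Z R) (v : Z -> R) (S : set Z) (c : R) :
  supp y `<=` S -> (forall z, S z -> v z <= c) -> Uexp y v <= c.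
Proof.
move=> hS hv; rewrite /Uexp -[c]mul1r -(lprob_sum1 y) mulr_suml.
apply: ler_sum => z _.
have := lprob_ge0 y z; rewrite le_eqVlt => /orP[/eqP <-|pos].
  by rewrite !mul0r.
by rewrite ler_pM2l //; apply: hv; apply: hS.
Qed.

Lemma U_ge (y : lottery Z R) (v : Z -> R) (S : set Z) (c : R) :
  supp y `<=` S -> (forall z, S z -> c <= v z) -> c <= Uexp y v.
Proof.
move=> hS hv; rewrite /Uexp -[c]mul1r -(lprob_sum1 y) mulr_suml.
apply: ler_sum => z _.
have := lprob_ge0 y z; rewrite le_eqVlt => /orP[/eqP <-|pos].
  by rewrite !mul0r.
by rewrite ler_pM2l //; apply: hv; apply: hS.
Qed.

Lemma U_gt (y : lottery Z R) (v : Z -> R) (S : set Z) (c : R) (z0 : Z) :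
  supp y `<=` S -> (forall z, S z -> c <= v z) -> supp y z0 -> c < v z0 ->
  c < Uexp y v.
Proof.
move=> hS hv hz0 hc; rewrite /Uexp -[c]mul1r -(lprob_sum1 y) mulr_suml.
rewrite (bigD1 z0) //= [X in _ < X](bigD1 z0) //=.
apply: ltr_leD; first by rewrite ltr_pM2l.
apply: ler_sum => z _.
have := lprob_ge0 y z; rewrite le_eqVlt => /orP[/eqP <-|pos].
  by rewrite !mul0r.
by rewrite ler_pM2l //; apply: hv; apply: hS.
Qed.

Lemma supp_n0 (y : lottery Z R) : exists z, supp y z.
Proof.
apply/not_existsP => h.
have : \sum_(z : Z) y z = 0.
  apply: big1 => z _; apply/eqP; rewrite eq_le lprob_ge0 andbT.
  by rewrite leNgt; apply/negP => hz; apply: (h z).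
by rewrite lprob_sum1 => /eqP; rewrite oner_eq0.
Qed.

End Aux.

Theorem lemma8 (R : realType) (n : nat) (Hn : (3 <= n)%N)
  (Theta : countType) (Z : finType)
  (u : 'I_n -> Theta -> Z -> R) (F : Theta -> set Z)
  (M : 'I_n -> countType) (g : (forall i, M i) -> lottery Z R)
  (Himpl : pure_nash_implements u F g)
  (i : 'I_n) (th : Theta) (m : forall j, M j)
  (Hm : PNE u g th m)
  (Hmin : F th `<=` argmin (Zstar u F) (u i th))
  (HXi : Xi u F i th !=set0)
  (Hmax : iZ_max u F i (Zstar u F `&` lowerZE u i th (F th))) :
  \bigcup_(mi' in [set: M i]) supp (g (dfwith m mi'))
  `<=` Zstar u F `&` lowerZE u i th (F th) `&`
       \bigcup_(K in Xi u F i th) \bigcap_(th' in K) F th'.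
Proof.
set Zs := Zstar u F.
set L := Zs `&` lowerZE u i th (F th).
have dfw2 : forall (p : forall j, M j) (a b : M i), dfwith (dfwith p a) b = dfwith p b.
  move=> p a b; apply: functional_extensionality_dep => j.
  case: (eqVneq i j) => [<-|ij]; first by rewrite !dfwith_in.
  by rewrite !dfwith_out.
have inF : forall t p, PNE u g t p -> supp (g p) `<=` F t.
  by move=> t p hp z hz; rewrite -Himpl; exists p.
have HA : forall p, supp (g p) `<=` Zs.
  move=> p z hz; rewrite /Zs /Zstar.
  case: asboolP => [[j [_ [t0 [hj ho]]]]|_]; last by [].
  have hc : forall k (y : lottery Z R), Uexp y (u k t0) = u k t0 z.
    move=> k y; apply/eqP; rewrite eq_le; apply/andP; split.
      apply: (@U_le _ _ y _ setT) => // w _.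
      case: (eqVneq k j) => [->|kj].
        by have [_ ] := hj z I; apply.
      by have [_ ] := ho k kj z I; apply.
    apply: (@U_ge _ _ y _ setT) => // w _.
    case: (eqVneq k j) => [->|kj].
      by have [_ ] := hj w I; apply.
    by have [_ ] := ho k kj w I; apply.
  exists t0 => //; apply: (inF t0 p) => //.
  by move=> k mk; rewrite !hc.
have FthZs : F th `<=` Zs by move=> z /Hmin [].
have S1 : forall p, PNE u g th p -> forall a : M i, supp (g (dfwith p a)) `<=` L.
  move=> p hp a z hz; split; first exact: (HA _ _ hz).
  move=> z' hz'; rewrite /lowerZ /=.
  rewrite leNgt; apply/negP => hlt.
  have h1 : Uexp (g p) (u i th) <= u i th z'.
    apply: (@U_le _ _ _ _ (F th)); first exact: inF.
    by move=> w hw; have [_ ] := Hmin w hw; apply; apply: FthZs.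
  have h2 : u i th z' < Uexp (g (dfwith p a)) (u i th).
    apply: (@U_gt _ _ _ _ Zs _ z) => //.
    by move=> w hw; have [_ ] := Hmin z' hz'; apply.
  have := hp i a; rewrite leNgt => /negP; apply.
  by apply: (lt_le_trans h1 h2) || apply: (le_lt_trans h1 h2).
have KL : forall E t p, iZth_max u F i t E -> supp (g p) `<=` E ->
    (forall a : M i, supp (g (dfwith p a)) `<=` E) -> PNE u g t p.
  move=> E t p [hE0 [hEZ [hEi hEo]]] hp hd k a.
  have [e he] := @supp_n0 _ _ (g p).
  have eE := hp e he.
  case: (eqVneq i k) => [ik|ik].
    subst k.
    apply: (@le_trans _ _ (u i t e)).
      apply: (@U_le _ _ _ _ E); first exact: hd.
      by move=> w hw; have [_ ] := hEi e eE; apply.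
    apply: (@U_ge _ _ _ _ E) => // w hw.
    by have [_ ] := hEi w hw; apply.
  have ki : k != i by rewrite eq_sym.
  apply: (@le_trans _ _ (u k t e)).
    apply: (@U_le _ _ _ _ Zs); first exact: (HA _).
    by move=> w hw; have [_ ] := hEo k ki e eE; apply.
  apply: (@U_ge _ _ _ _ E) => // w hw.
  by have [_ ] := hEo k ki w hw; apply; apply: hEZ.
set D := [set z | exists a : M i, supp (g (dfwith m a)) z].
have Key2 : forall E t, iZth_max u F i t E -> D `<=` E -> D `<=` F t.
  move=> E t hE hDE z [a hz]; apply: (inF t (dfwith m a)) => //.
  apply: (KL E) => //.
    by move=> w hw; apply: hDE; exists a.
  by move=> b; rewrite dfw2 => w hw; apply: hDE; exists b.
have DL : D `<=` L by move=> z [a hz]; exact: (S1 m Hm a).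
have Dn0 : D !=set0.
  by have [z hz] := @supp_n0 _ _ (g (dfwith m (m i))); exists z, (m i).
have LamM : forall E E' t, E' !=set0 -> E' `<=` E ->
    iZth_max u F i t E -> iZth_max u F i t E'.
  move=> E E' t h0 hs [_ [hZ [hi ho]]]; split=> //; split.
    by move=> z /hs /hZ.
  split.
    move=> z hz; split=> // z' hz'.
    by have [_ ] := hi z (hs _ hz); apply; apply: hs.
  by move=> j ji z hz; exact: (ho j ji z (hs _ hz)).
have FthL : F th `<=` L.
  move=> z hz; split; first exact: FthZs.
  move=> z' hz'; rewrite /lowerZ /=.
  by have [_ ] := Hmin z hz; apply; apply: FthZs.
have ThI : Lambda u F i L `<=` Theta_i u F i th.
  move=> t ht; split.
    apply: (LamM L) => //.
      by have [z hz] := @supp_n0 _ _ (g m); exists z; apply: (inF th m).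
  move=> z; rewrite -Himpl => -[p hp hz].
  rewrite -Himpl; exists p => //.
  apply: (KL L) => //.
    by move=> w hw; apply: FthL; apply: (inF th p).
  exact: S1.
set Phi := fun K : set Theta => Theta_i u F i th `&`
   Lambda u F i (L `&` \bigcap_(t in K) F t).
have PhiM : forall K1 K2, K1 `<=` K2 -> D `<=` \bigcap_(t in K2) F t ->
    Phi K1 `<=` Phi K2.
  move=> K1 K2 s hD t [ht hl]; split=> //.
  apply: (LamM (L `&` \bigcap_(t in K1) F t)) hl.
    by have [z hz] := Dn0; exists z; split; [exact: DL | exact: hD].
  by move=> z [hzL hz]; split=> // t' /s; exact: hz.
set Kfam := [set K : set Theta | K `<=` Phi K /\ D `<=` \bigcap_(t in K) F t].
set Ks := [set t | exists K, Kfam K /\ K t].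
have DKs : D `<=` \bigcap_(t in Ks) F t.
  by move=> z hz t [K [[_ hK] hKt]]; exact: (hK z hz t hKt).
have KsPhi : Ks `<=` Phi Ks.
  move=> t [K [[hK1 hK2] hKt]]; apply: (PhiM K Ks) => //; last exact: hK1.
  by move=> t' h; exists K.
have DPhi : D `<=` \bigcap_(t in Phi Ks) F t.
  move=> z hz t' [_ hl]; apply: (Key2 _ t' hl) => //.
  by move=> w hw; split; [exact: DL | exact: DKs].
have PhiKs : Phi Ks `<=` Ks.
  move=> t ht; exists (Phi Ks); split=> //; split=> //.
  exact: PhiM.
have KsN : Ks !=set0.
  have [t0 ht0] := Hmax.
  exists t0; apply: PhiKs; apply: (PhiM set0) => //.
  split; first exact: ThI.
  apply: (LamM L) ht0.
    by have [z hz] := Dn0; exists z; split; [exact: DL | by []].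
  by move=> z [].
have XiKs : Xi u F i th Ks.
  split; first by move=> t /KsPhi [].
  split=> //.
  by apply/seteqP; split; [exact: PhiKs | exact: KsPhi].
move=> z [a _ hz].
have hD : D z by exists a.
split; first exact: DL.
by exists Ks => //; exact: DKs.
Qed.
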